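(* Let $\mathbf A$ and $\mathbf B$ be algebras on the same underlying set $A$ such that some ternary operation $q$ is a Mal'cev term operation of both, and let $n\ge1$ and $\alpha_0,\dots,\alpha_{n-1}$ be equivalence relations on $A$ that are congruences of both $\mathbf A$ and $\mathbf B$. Then $[\alpha_i\mid i\in I]_{\mathbf A}=[\alpha_i\mid i\in I]_{\mathbf B}$ for all nonempty $I\subseteq\{0,\dots,n-1\}$ if and only if $\Delta_{\mathbf A}(\alpha_0,\dots,\alpha_{n-1})=\Delta_{\mathbf B}(\alpha_0,\dots,\alpha_{n-1})$.
   Context: A Mal'cev term operation is a ternary term operation $q$ with $q(x,x,y)=y=q(y,x,x)$. $[\cdots]_{\mathbf X}$ denotes the commutator computed in the algebra $\mathbf X$, and $[\alpha_i\mid i\in I]$ means $[\alpha_{i_0},\dots,\alpha_{i_{k-1}}]$ where $I=\{i_0<\dots<i_{k-1}\}$. Higher commutator (Bulatov): in an algebra $\mathbf X$, for congruences $\beta_0,\dots,\beta_{m-1},\gamma$, say $\beta_0,\dots,\beta_{m-2}$ centralize $\beta_{m-1}$ modulo $\gamma$ if for all tuples $\mathbf a_i,\mathbf b_i$ ($i<m$, with $\mathbf a_i\neq\mathbf b_i$ congruent modulo $\beta_i$ coordinatewise) and every term operation $t$ of $\mathbf X$ such that $t(\mathbf x_0,\dots,\mathbf x_{m-2},\mathbf a_{m-1})\equiv_\gamma t(\mathbf x_0,\dots,\mathbf x_{m-2},\mathbf b_{m-1})$ for all $(\mathbf x_0,\dots,\mathbf x_{m-2})\in(\{\mathbf a_0,\mathbf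 b_0\}\times\dots\times\{\mathbf a_{m-2},\mathbf b_{m-2}\})\setminus\{(\mathbf b_0,\dots,\mathbf b_{m-2})\}$, we have $t(\mathbf b_0,\dots,\mathbf b_{m-2},\mathbf a_{m-1})\equiv_\gamma t(\mathbf b_0,\dots,\mathbf b_{m-2},\mathbf b_{m-1})$. $[\beta_0,\dots,\beta_{m-1}]_{\mathbf X}$ is the smallest such $\gamma$. For $k\ge0$, $k_{(i)}$ is the $i$-th binary digit of $k$ (least significant is $i=0$). For $a,b\in A$ and $i<n$, $\mathbf c_i^n(a,b)\in A^{2^n}$ has $k$-th coordinate $a$ if $k_{(i)}=0$ and $b$ if $k_{(i)}=1$. $\Delta_{\mathbf X}(\alpha_0,\dots,\alpha_{n-1})$ is the subuniverse of $\mathbf X^{2^n}$ generated by $\{\mathbf c_i^n(a,b): i<n,\ (a,b)\in\alpha_i\}$. *)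

(* Defs.v *)
From mathcomp Require Import all_boot.
Set Implicit Arguments. Unset Strict Implicit. Unset Printing Implicit Defensive.

Record algebra (A : Type) := Algebra {
  op_idx : Type;
  arity : op_idx -> nat;
  op : forall o : op_idx, ('I_(arity o) -> A) -> A }.

Section UA.
Variable A : Type.
Implicit Types (X : algebra A).

Inductive termop X (V : Type) : ((V -> A) -> A) -> Prop :=
| T_var (v : V) (f : (V -> A) -> A) :
    (forall x, f x = x v) -> termop X f
| T_op (o : op_idx X) (gs : 'I_(arity o) -> (V -> A) -> A) (f : (V -> A) -> A) :
    (forall l, termop X (gs l)) ->
    (forall x, f x = @op A X o (fun l => gs l x)) -> termop X f.

Definition malcev_term X (q : A -> A -> A -> A) : Prop :=
  termop X (fun x : 'I_3 -> A => q (x (inord 0)) (x (inord 1)) (x (inord 2))) /\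
  (forall x y, q x x y = y /\ q y x x = y).

Definition congruence X (r : A -> A -> Prop) : Prop :=
  [/\ (forall x, r x x), (forall x y, r x y -> r y x),
      (forall x y z, r x y -> r y z -> r x z) &
      forall (o : op_idx X) (x y : 'I_(arity o) -> A),
        (forall l, r (x l) (y l)) -> r (@op A X o x) (@op A X o y)].

(* Bulatov's centrality condition: beta_0,...,beta_(m-2) centralize beta_(m-1)
   modulo gamma.  Block i of the tuple of variables is a tuple of length k i;
   the term t has variables {i : 'I_m & 'I_(k i)}. *)
Definition centralizes X (m : nat) (beta : 'I_m -> A -> A -> Prop)
    (gamma : A -> A -> Prop) : Prop :=
  forall (k : 'I_m -> nat) (a b : forall i : 'I_m, 'I_(k i) -> A),
    (forall i, exists l, a i l <> b i l) ->
    (forall i l, beta i (a i l) (b i l)) ->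
    forall t : ({i : 'I_m & 'I_(k i)} -> A) -> A,
    termop X t ->
    let sel (s : 'I_m -> bool) (last : bool) (i : 'I_m) : 'I_(k i) -> A :=
      if val i == m.-1 then (if last then b i else a i)
      else (if s i then b i else a i) in
    let ev (x : forall i : 'I_m, 'I_(k i) -> A) := t (fun p => x (tag p) (tagged p)) in
    (forall s : 'I_m -> bool,
        (exists i : 'I_m, val i != m.-1 /\ s i = false) ->
        gamma (ev (sel s false)) (ev (sel s true))) ->
    gamma (ev (sel (fun _ => true) false)) (ev (sel (fun _ => true) true)).

Definition commutator X (m : nat) (beta : 'I_m -> A -> A -> Prop) : A -> A -> Prop :=
  fun x y => forall gamma, congruence X gamma -> centralizes X beta gamma -> gamma x y.

(* [alpha_i | i in I]_X, with I = {i_0 < ... < i_(k-1)} listed increasingly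
   (enum of a set of ordinals is increasing). *)
Definition commutator_sub X (n : nat) (alpha : 'I_n -> A -> A -> Prop)
    (I : {set 'I_n}) : A -> A -> Prop :=
  commutator X (fun j : 'I_#|I| => alpha (enum_val j)).

Definition bit (k i : nat) : bool := odd (k %/ 2 ^ i).

Definition cvec (n : nat) (i : nat) (a b : A) : 'I_(2 ^ n) -> A :=
  fun k => if bit k i then b else a.

Inductive Delta X (n : nat) (alpha : 'I_n -> A -> A -> Prop) : ('I_(2 ^ n) -> A) -> Prop :=
| D_gen (i : 'I_n) (a b : A) (v : 'I_(2 ^ n) -> A) :
    alpha i a b -> (forall k, v k = @cvec n i a b k) -> Delta X alpha v
| D_op (o : op_idx X) (vs : 'I_(arity o) -> 'I_(2 ^ n) -> A) (v : 'I_(2 ^ n) -> A) :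
    (forall l, Delta X alpha (vs l)) ->
    (forall k, v k = @op A X o (fun l => vs l k)) -> Delta X alpha v.

End UA.

(* Main.v *)
Require Import Defs.
From mathcomp Require Import all_boot zify.
From Stdlib Require Import FunctionalExtensionality IndefiniteDescription Classical.
Set Implicit Arguments. Unset Strict Implicit. Unset Printing Implicit Defensive.

Fixpoint enc (f : nat -> bool) (m : nat) : nat :=
  if m is m'.+1 then f 0 + 2 * enc (fun i => f i.+1) m' else 0.

Lemma bit0E x : bit x 0 = odd x.
Proof. by rewrite /bit expn0 divn1. Qed.

Lemma bitSE x i : bit x i.+1 = bit (x./2) i.
Proof. by rewrite /bit expnS divnMA divn2. Qed.

Lemma half_b2x (b : bool) x : (b + 2 * x)./2 = x.
Proof. rewrite halfD mul2n half_double odd_double andbF add0n. by case: b. Qed.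

Lemma enc_lt f m : enc f m < 2 ^ m.
Proof.
elim: m f => [|m IH] f //=. have := IH (fun i => f i.+1). rewrite expnS.
case: (f 0) => /=; lia.
Qed.

Lemma bit_enc f m i : bit (enc f m) i = (i < m) && f i.
Proof.
elim: m f i => [|m IH] f i /=.
  by rewrite /bit div0n.
case: i => [|i].
  by rewrite bit0E oddD oddM /=; case: (f 0).
by rewrite bitSE half_b2x IH.
Qed.

Lemma bit_big x i : x < 2 ^ i -> bit x i = false.
Proof. by move=> h; rewrite /bit divn_small. Qed.

Lemma eq_enc f g m : (forall i, i < m -> f i = g i) -> enc f m = enc g m.
Proof.
elim: m f g => [|m IH] f g //= h.
by rewrite h // (IH _ (fun i => g i.+1)) // => i hi; apply: h.
Qed.

Lemma enc_bit x m : x < 2 ^ m -> enc (bit x) m = x.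
Proof.
elim: m x => [|m IH] x /=.
  by rewrite expn0; case: x.
move=> h. rewrite (@eq_enc _ (bit x./2)); last by move=> i _; rewrite bitSE.
rewrite (IH (x./2)).
  by rewrite bit0E mul2n -{3}(odd_double_half x).
rewrite expnS in h. move: h. 
rewrite -{1}(odd_double_half x). case: (odd x) => /=; rewrite -mul2n; lia.
Qed.

Lemma enc_mono (f g : nat -> bool) m : (forall i, i < m -> f i -> g i) -> enc f m <= enc g m.
Proof.
elim: m f g => [|m IH] f g //= h.
have := IH (fun i => f i.+1) (fun i => g i.+1) (fun i hi => h i.+1 hi).
have := h 0 isT. case: (f 0); case: (g 0) => //=; try lia.

Qed.

Lemma bit_ord m (x : 'I_(2 ^ m)) i : m <= i -> bit x i = false.
Proof. move=> h; apply: bit_big; apply: leq_trans (ltn_ord x) _; by rewrite leq_exp2l. Qed.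

Definition vtx m (f : nat -> bool) : 'I_(2 ^ m) := Ordinal (enc_lt f m).

Lemma bit_vtx m f i : bit (vtx m f) i = (i < m) && f i.
Proof. exact: bit_enc. Qed.

Lemma vtx_eq m (x y : 'I_(2 ^ m)) : (forall i, i < m -> bit x i = bit y i) -> x = y.
Proof.
move=> h; apply: val_inj => /=.
by rewrite -(enc_bit (ltn_ord x)) -(enc_bit (ltn_ord y)); apply: eq_enc.
Qed.

Lemma vtx_le m (x y : 'I_(2 ^ m)) : (forall i, i < m -> bit x i -> bit y i) -> x <= y.
Proof.
move=> h. rewrite -(enc_bit (ltn_ord x)) -(enc_bit (ltn_ord y)); exact: enc_mono.
Qed.

Lemma vtxK m (x : 'I_(2 ^ m)) : vtx m (bit x) = x.
Proof. by apply: val_inj; rewrite /= enc_bit. Qed.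

Section Gen.
Variable A : Type.
Variable X : algebra A.

Lemma Delta_ext m (be : 'I_m -> A -> A -> Prop) (v w : 'I_(2 ^ m) -> A) :
  Delta X be v -> (forall k, w k = v k) -> Delta X be w.
Proof.
case=> [i a b v' hab hv | o vs v' hvs hv] h.
  by apply: (@D_gen _ X _ _ i a b _ hab) => k; rewrite h hv.
by apply: (D_op (vs:=vs)) => // k; rewrite h hv.
Qed.

Lemma Delta_hom m m' (be : 'I_m -> A -> A -> Prop) (be' : 'I_m' -> A -> A -> Prop)
  (phi : 'I_(2 ^ m') -> 'I_(2 ^ m)) :
  (forall i a b, be i a b -> Delta X be' (fun k => @cvec _ m i a b (phi k))) ->
  forall v, Delta X be v -> Delta X be' (fun k => v (phi k)).
Proof.
move=> hg v; elim=> [i a b v' hab hv | o vs v' hvs IH hv].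
  by apply: Delta_ext (hg _ _ _ hab) _ => k; rewrite hv.
by apply: (D_op (vs := fun l k => vs l (phi k))) => // k; rewrite hv.
Qed.

Lemma termop_reindex (V W : Type) (t : (V -> A) -> A) (h : V -> W) :
  termop X t -> termop X (fun y : W -> A => t (fun v => y (h v))).
Proof.
elim=> [v f hf | o gs f hgs IH hf].
  by apply: (@T_var _ X _ (h v)) => x; rewrite hf.
by apply: (T_op (gs := fun l y => gs l (fun v => y (h v)))) => // x; rewrite hf.
Qed.

Lemma Delta_termop m (be : 'I_m -> A -> A -> Prop) (V : Type) (t : (V -> A) -> A)
  (g : V -> 'I_(2 ^ m) -> A) :
  termop X t -> (forall v, Delta X be (g v)) -> Delta X be (fun k => t (fun v => g v k)).
Proof.
move=> ht hg; elim: ht => [v f hf | o gs f hgs IH hf].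
  by apply: Delta_ext (hg v) _ => k; rewrite hf.
by apply: (D_op (vs := fun l k => gs l (fun v => g v k))) => // k; rewrite hf.
Qed.

Lemma cong_termop (ga : A -> A -> Prop) (V : Type) (t : (V -> A) -> A) :
  congruence X ga -> termop X t -> forall x y, (forall v, ga (x v) (y v)) -> ga (t x) (t y).
Proof.
case=> hr _ _ hop ht; elim: ht => [v f hf | o gs f hgs IH hf] x y hxy.
  by rewrite !hf.
by rewrite !hf; apply: hop => l; apply: IH.
Qed.

Definition sel3 (x y z : A) (i : 'I_3) : A :=
  if nat_of_ord i == 0 then x else if nat_of_ord i == 1 then y else z.

Lemma sel3E x y z : sel3 x y z (inord 0) = x /\ sel3 x y z (inord 1) = y /\ sel3 x y z (inord 2) = z.
Proof. by rewrite /sel3 !inordK. Qed.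

Variable q : A -> A -> A -> A.
Hypothesis hq : malcev_term X q.

Lemma q_term : termop X (fun x : 'I_3 -> A => q (x (inord 0)) (x (inord 1)) (x (inord 2))).
Proof. by case: hq. Qed.

Lemma qxxy x y : q x x y = y. Proof. by case: hq => _ /(_ x y) []. Qed.
Lemma qyxx x y : q y x x = y. Proof. by case: hq => _ /(_ x y) []. Qed.

Lemma Delta_q m (be : 'I_m -> A -> A -> Prop) u v w :
  Delta X be u -> Delta X be v -> Delta X be w ->
  Delta X be (fun k => q (u k) (v k) (w k)).
Proof.
move=> hu hv hw.
apply: Delta_ext (Delta_termop (g := fun i k => sel3 (u k) (v k) (w k) i) q_term _) _.
  by move=> i; rewrite /sel3; case: (nat_of_ord i == 0) => //; case: (nat_of_ord i == 1).
by move=> k /=; have [-> [-> ->]] := sel3E (u k) (v k) (w k).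
Qed.

Lemma cong_q (ga : A -> A -> Prop) x y z x' y' z' :
  congruence X ga -> ga x x' -> ga y y' -> ga z z' -> ga (q x y z) (q x' y' z').
Proof.
move=> hc h1 h2 h3.
have := cong_termop hc q_term (x := sel3 x y z) (y := sel3 x' y' z').
have [-> [-> ->]] := sel3E x y z. have [-> [-> ->]] := sel3E x' y' z'.
apply=> i; rewrite /sel3; case: (nat_of_ord i == 0) => //; case: (nat_of_ord i == 1) => //.
Qed.

Lemma Delta_const m (be : 'I_m -> A -> A -> Prop) (hm : 0 < m) :
  (forall i, congruence X (be i)) -> forall x, Delta X be (fun _ => x).
Proof.
move=> hc x; apply: (@D_gen _ X _ _ (Ordinal hm) x x).
  by case: (hc (Ordinal hm)).
by move=> k; rewrite /cvec; case: bit.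
Qed.

End Gen.

Definition alltop m (k : 'I_(2 ^ m)) := [forall j : 'I_m, bit k j].
Definition etop (A : Type) m (x y : A) : 'I_(2 ^ m) -> A := fun k => if alltop k then y else x.
Definition topv m := vtx m (fun _ => true).
Definition clr m (j : nat) (k : 'I_(2 ^ m)) := vtx m (fun i => bit k i && (i != j)).

Lemma alltop_topv m : alltop (topv m).
Proof. by apply/forallP => j; rewrite bit_vtx ltn_ord. Qed.

Lemma alltopP m (k : 'I_(2 ^ m)) : alltop k -> k = topv m.
Proof.
move/forallP=> h; apply: vtx_eq => i hi; rewrite bit_vtx hi.
exact: (h (Ordinal hi)).
Qed.

Lemma bit_clr m j (k : 'I_(2 ^ m)) i : bit (clr j k) i = (i < m) && bit k i && (i != j).
Proof. by rewrite bit_vtx andbA. Qed.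

Lemma clr_id m j (k : 'I_(2 ^ m)) : ~~ bit k j -> clr j k = k.
Proof.
move=> h; apply: vtx_eq => i hi; rewrite bit_clr hi /=.
by case: (eqVneq i j) => [->|]; rewrite ?andbT // (negbTE h).
Qed.

Section L2.
Variable A : Type.
Variable X : algebra A.
Variable q : A -> A -> A -> A.
Hypothesis hq : malcev_term X q.
Variable m : nat.
Hypothesis hm : 0 < m.
Variable be : 'I_m -> A -> A -> Prop.
Hypothesis hc : forall i, congruence X (be i).

Lemma Delta_clr j v : Delta X be v -> Delta X be (fun k => v (clr j k)).
Proof.
apply: Delta_hom => i a b hab.
case: (eqVneq (nat_of_ord i) j) => [hij|hij].
  apply: Delta_ext (Delta_const hm hc a) _ => k.
  by rewrite /cvec bit_clr hij eqxx !andbF.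
apply: (@D_gen _ X _ _ i a b _ hab) => k.
by rewrite /cvec bit_clr ltn_ord hij andbT.
Qed.

Lemma etop_agree u v : Delta X be u -> Delta X be v ->
  (forall k, ~~ alltop k -> u k = v k) -> Delta X be (etop (u (topv m)) (v (topv m))).
Proof.
move=> hu hv h.
apply: Delta_ext (Delta_q hq (Delta_const hm hc (u (topv m))) hu hv) _ => k.
rewrite /etop; case: ifP => [/alltopP ->|/negbT /h ->].
  by rewrite (qxxy hq).
by rewrite (qyxx hq).
Qed.

Definition gD (x y : A) := Delta X be (etop x y).

Lemma gD_cong : congruence X gD.
Proof.
split.
- move=> x; apply: Delta_ext (Delta_const hm hc x) _ => k.
  by rewrite /etop; case: ifP.
- move=> x y h; apply: Delta_ext (Delta_q hq (Delta_const hm hc y) h (Delta_const hm hc x)) _ => k.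
  by rewrite /etop; case: ifP => _; rewrite ?(qxxy hq) ?(qyxx hq).
- move=> x y z h1 h2; apply: Delta_ext (Delta_q hq h1 (Delta_const hm hc y) h2) _ => k.
  by rewrite /etop; case: ifP => _; rewrite ?(qxxy hq) ?(qyxx hq).
- move=> o x y h; apply: (D_op (vs := fun l => etop (x l) (y l))) => // k.
  by rewrite /etop; case: ifP.
Qed.

Lemma gD_centralizes : centralizes X be gD.
Proof.
move=> k a b hne hab t ht sel ev hyp.
pose w (kk : 'I_(2 ^ m)) :=
  t (fun p => if bit kk (tag p) then b (tag p) (tagged p) else a (tag p) (tagged p)).
have wD : Delta X be w.
  apply: (@Delta_termop _ X m be _ t (fun p kk => @cvec _ m (tag p) (a (tag p) (tagged p)) (b (tag p) (tagged p)) kk) ht) => p.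
  by apply: (@D_gen _ X _ _ (tag p) _ _ _ (hab _ _)).
have evw : forall (kk : 'I_(2 ^ m)) s l,
    (forall i : 'I_m, bit kk i = (if nat_of_ord i == m.-1 then l else s i)) -> ev (sel s l) = w kk.
  move=> kk s l h; rewrite /ev /w /sel; congr t; apply: functional_extensionality_dep => p.
  rewrite h; change (val (tag p)) with (nat_of_ord (tag p)); case: (nat_of_ord (tag p) == m.-1) => //; [by case: (l)|by case: (s (tag p))].
have hgc := gD_cong.
have hm1 : m.-1 < m by rewrite prednK.
have iter : forall r, r <= m.-1 -> exists v : 'I_(2 ^ m) -> A, [/\ Delta X be v,
    (forall kk : 'I_(2 ^ m), ~~ bit kk m.-1 -> v kk = w kk),
    (forall kk : 'I_(2 ^ m), bit kk m.-1 -> (exists2 j, j < r & ~~ bit kk j) -> v kk = w (clr m.-1 kk)) &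
    (forall kk : 'I_(2 ^ m), gD (v kk) (w kk))].
  elim=> [_|r IH hr].
    exists w; split => //; first by move=> kk _ [j].
    by move=> kk; case: hgc => + _ _ _; apply.
  have [|v [vD va vb vc]] := IH; first lia.
  have hrm : r != m.-1 by rewrite neq_ltn; apply/orP; left; lia.
  have bclr_r : forall (kk : 'I_(2 ^ m)) (i : nat), i != r -> i < m -> bit (clr r kk) i = bit kk i.
    by move=> kk i hi him; rewrite bit_clr him hi andbT.
  exists (fun kk => q (v kk) (v (clr r kk)) (v (clr m.-1 (clr r kk)))); split.
  - apply: Delta_q => //; first exact: Delta_clr.
    exact: (Delta_clr r (Delta_clr m.-1 vD)).
  - move=> kk hk.
    have hb : ~~ bit (clr r kk) m.-1 by rewrite bclr_r // eq_sym.
    by rewrite (clr_id hb) (qyxx hq) va.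
  - move=> kk hk [j hj hnb].
    case hkr : (bit kk r).
    + have hjr : j < r.
        rewrite ltnS leq_eqVlt in hj; case/orP: hj => // /eqP hj.
        by move: hnb; rewrite hj hkr.
      have hb : bit (clr r kk) m.-1 by rewrite bclr_r // eq_sym.
      have hb2 : ~~ bit (clr m.-1 (clr r kk)) m.-1 by rewrite bit_clr eqxx andbF.
      rewrite (vb kk hk) ?(vb (clr r kk) hb); last by exists j.
        by rewrite va // (qyxx hq).
      exists j => //; rewrite bclr_r //; [by rewrite neq_ltn hjr|lia].
    + have hb : ~~ bit kk r by rewrite hkr.
      by rewrite (clr_id hb) (qxxy hq) va // bit_clr eqxx andbF.
  - move=> kk.
    have h1 : gD (q (v kk) (v (clr r kk)) (v (clr m.-1 (clr r kk))))
                 (q (w kk) (w (clr r kk)) (w (clr m.-1 (clr r kk)))).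
      by apply: (cong_q hq hgc).
    have h2 : gD (w (clr r kk)) (w (clr m.-1 (clr r kk))).
      case hk : (bit kk m.-1).
      + have := hyp (fun i => bit (clr r kk) i).
        rewrite (evw (clr m.-1 (clr r kk)) (fun i => bit (clr r kk) i) false).
          rewrite (evw (clr r kk) (fun i => bit (clr r kk) i) true).
            move=> H; case: hgc => _ hs _ _; apply: hs; apply: H.
            by exists (Ordinal (ltn_trans hr hm1)); split; [by change (r != m.-1)|rewrite bit_clr eqxx andbF].
          move=> i; case: eqP => // ->; by rewrite bclr_r // eq_sym.
        by move=> i; rewrite bit_clr ltn_ord /=; case: eqP => [->|]; rewrite ?andbF ?andbT.
      + have hb : ~~ bit (clr r kk) m.-1 by rewrite bclr_r // ?hk // eq_sym.
        by rewrite (clr_id hb); case: hgc => + _ _ _; apply.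
    have [hrf _ ht' _] := hgc; apply: ht' h1 _.
    rewrite -{2}(qyxx hq (w (clr m.-1 (clr r kk))) (w kk)).
    by apply: (cong_q hq hgc) => //; apply: hrf.
have [v [vD va vb vc]] := iter m.-1 (leqnn _).
have uD := Delta_clr m.-1 wD.
have hag := etop_agree uD vD.
have : gD (w (clr m.-1 (topv m))) (v (topv m)).
  apply: hag => kk hk.
  case hb : (bit kk m.-1).
  + rewrite vb //. have : ~~ [forall j : 'I_m, bit kk j] by [].
    rewrite negb_forall => /existsP [j hj]; exists j => //.
    have : nat_of_ord j != m.-1 by apply/eqP => e; move: hj; rewrite e hb.
    move: (ltn_ord j); rewrite neq_ltn => h1 /orP [] //; lia.
  + by rewrite va ?hb // clr_id ?hb.
move=> H1; have H2 := vc (topv m).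
have E1 : ev (sel (fun _ => true) false) = w (clr m.-1 (topv m)).
  apply: evw => i; rewrite bit_clr ltn_ord bit_vtx ltn_ord /=.
  by case: eqP.
have E2 : ev (sel (fun _ => true) true) = w (topv m).
  by apply: evw => i; rewrite bit_vtx ltn_ord; case: eqP.
rewrite E1 E2; case: hgc => _ _ ht' _; exact: ht' H1 H2.
Qed.

Lemma comm_to_Delta x y : commutator X be x y -> Delta X be (etop x y).
Proof. by move=> h; apply: (h gD gD_cong gD_centralizes). Qed.

End L2.

Section CA.
Variable A : Type.
Variable X : algebra A.
Variable m : nat.
Hypothesis hm : 0 < m.
Variable be : 'I_m -> A -> A -> Prop.

Lemma centralizes_apply (ga : A -> A -> Prop) : centralizes X be ga ->
  forall (k : 'I_m -> nat) (a b : forall i : 'I_m, 'I_(k i) -> A),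
    (forall i, exists l, a i l <> b i l) ->
    (forall i l, be i (a i l) (b i l)) ->
    forall t : ({i : 'I_m & 'I_(k i)} -> A) -> A, termop X t ->
    forall W : 'I_(2 ^ m) -> A,
    (forall kk, W kk = t (fun p => if bit kk (tag p) then b (tag p) (tagged p) else a (tag p) (tagged p))) ->
    (forall kk : 'I_(2 ^ m), bit kk m.-1 -> ~~ alltop kk -> ga (W (clr m.-1 kk)) (W kk)) ->
    ga (W (clr m.-1 (topv m))) (W (topv m)).
Proof.
move=> hcent k a b hne hab t ht W hW hyp.
have H := hcent k a b hne hab t ht.
pose ev' (s : 'I_m -> bool) (l : bool) := t (fun p => (if nat_of_ord (tag p) == m.-1 then (if l then b (tag p) else a (tag p)) else (if s (tag p) then b (tag p) else a (tag p))) (tagged p)).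
have E : forall (kk : 'I_(2 ^ m)) s l, (forall i : 'I_m, bit kk i = (if nat_of_ord i == m.-1 then l else s i)) -> W kk = ev' s l.
  move=> kk s l h; rewrite hW /ev'; congr t; apply: functional_extensionality_dep => p.
  rewrite h; case: (nat_of_ord (tag p) == m.-1) => //; [by case: (l)|by case: (s (tag p))].
have hm1 : m.-1 < m by rewrite prednK.
rewrite (E (clr m.-1 (topv m)) (fun _ => true) false); last first.
  by move=> i; rewrite bit_clr ltn_ord bit_vtx ltn_ord /=; case: eqP.
rewrite (E (topv m) (fun _ => true) true); last first.
  by move=> i; rewrite bit_vtx ltn_ord; case: eqP.
apply: H => s [i [hi hs]].
pose f (j : nat) := (j == m.-1) || oapp s false (insub j).
have bf : forall i0 : 'I_m, bit (vtx m f) i0 = (nat_of_ord i0 == m.-1) || s i0.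
  by move=> i0; rewrite bit_vtx ltn_ord /f valK.
have := hyp (vtx m f).
rewrite (E (vtx m f) s true); last by move=> i0; rewrite bf; case: eqP.
rewrite (E (clr m.-1 (vtx m f)) s false); last first.
  move=> i0; rewrite bit_clr ltn_ord bf /=; case: eqP => //= _; by rewrite andbT.
apply.
  by rewrite bit_vtx hm1 /f eqxx.
apply/negP => /forallP /(_ i); rewrite bf hs orbF.
by move: hi => /negbTE ->.
Qed.
End CA.

Section Rep.
Variable A : Type.
Variable X : algebra A.
Variable m : nat.
Variable be : 'I_m -> A -> A -> Prop.
Hypothesis hc : forall i, congruence X (be i).

Definition RD := (nat * ('I_m -> nat -> A) * ('I_m -> nat -> A) * (('I_m * nat -> A) -> A))%type.

Definition RepP (v : 'I_(2 ^ m) -> A) (r : RD) : Prop :=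
  let: (N, a, b, t) := r in
  [/\ termop X t, (forall i j, be i (a i j) (b i j)),
      (forall x y : 'I_m * nat -> A, (forall i j, j < N -> x (i, j) = y (i, j)) -> t x = t y) &
      forall kk, v kk = t (fun p => if bit kk p.1 then b p.1 p.2 else a p.1 p.2)].

Lemma modM_insub M (l : 'I_M) j : insub ((j * M + l) %% M) = Some l.
Proof. by rewrite modnMDl modn_small // valK. Qed.

Lemma divM M (l : 'I_M) j : (j * M + l) %/ M = j.
Proof.
have hM : 0 < M by case: l => l' /=; case: M => // /[swap].
by rewrite divnMDl // divn_small // addn0.
Qed.

Lemma Delta_Rep v : Delta X be v -> exists r, RepP v r.
Proof.
elim=> [i a0 b0 v' hab hv | o vs v' hvs IH hv].
  exists (1, (fun _ _ => a0), (fun i' _ => if i' == i then b0 else a0), (fun x => x (i, 0))).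
  split.
  - by apply: (@T_var _ X _ (i, 0)).
  - move=> i' j; case: eqP => [->|_] //; by case: (hc i').
  - by move=> x y h; apply: h.
  - by move=> kk; rewrite hv /cvec /= eqxx; case: bit.
have [F hF] := functional_choice _ IH.
set M := arity o.
have x0 : A.
  have h0 : 0 < 2 ^ m by rewrite expn_gt0.
  exact: (v' (Ordinal h0)).
pose Fn l := (F l).1.1.1. pose Fa l := (F l).1.1.2. pose Fb l := (F l).1.2. pose Ft l := (F l).2.
have hF' : forall l, RepP (vs l) (Fn l, Fa l, Fb l, Ft l).
  by move=> l; rewrite /Fn /Fa /Fb /Ft; case: (F l) (hF l) => [[[? ?] ?] ?].
pose a' i j := if insub (j %% M) is Some l then Fa l i (j %/ M) else x0.
pose b' i j := if insub (j %% M) is Some l then Fb l i (j %/ M) else x0.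
pose Nm := \max_(l < M) Fn l.
exists (M * Nm, a', b', fun x : 'I_m * nat -> A => @op _ X o (fun l => Ft l (fun p => x (p.1, p.2 * M + l)))).
split.
- apply: (@T_op _ X _ o (fun l (x : 'I_m * nat -> A) => Ft l (fun p => x (p.1, p.2 * M + l)))) => // l.
  have [ht _ _ _] := hF' l.
  exact: (termop_reindex (fun p : 'I_m * nat => (p.1, p.2 * M + l)) ht).
- move=> i j; rewrite /a' /b'; case: insubP => [l _ _|_].
    by have [_ hb _ _] := hF' l; apply: hb.
  by case: (hc i).
- move=> x y h; congr op; apply: functional_extensionality_dep => l.
  have [_ _ hs _] := hF' l; apply: hs => i j hj; apply: h.
  have : Fn l <= Nm by apply: (@leq_bigmax_cond _ _ _ l).
  have := ltn_ord l. move=> hl hFn. have : j.+1 * M <= M * Nm by rewrite [M * _]mulnC; apply: leq_mul => //; apply: leq_trans hFn. rewrite mulSn /=; rewrite /M in hl *; lia.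
- move=> kk; rewrite hv; congr op; apply: functional_extensionality_dep => l.
  have [_ _ _ hr] := hF' l; rewrite hr; congr Ft; apply: functional_extensionality_dep => p.
  by rewrite /a' /b' /= modM_insub divM.
Qed.

Lemma etop_top x y : @etop A m x y (topv m) = y.
Proof. by rewrite /etop alltop_topv. Qed.

Lemma etop_nottop x y kk : ~~ alltop kk -> @etop A m x y kk = x.
Proof. by rewrite /etop => /negbTE ->. Qed.

Lemma not_alltop_clr j (hj : j < m) (kk : 'I_(2 ^ m)) : ~~ alltop (clr j kk).
Proof.
apply/negP => /forallP /(_ (Ordinal hj)); by rewrite bit_clr /= eqxx andbF.
Qed.

Lemma Delta_to_comm (hm : 0 < m) x y : Delta X be (@etop A m x y) -> commutator X be x y.
Proof.
move=> hD ga hgac hcent.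
have [[[[N a] b] t] [ht hab hs hr]] := Delta_Rep hD.
have hm1 : m.-1 < m by rewrite prednK.
case: (classic (exists i0 : 'I_m, forall c d, be i0 c d -> c = d)) => [[i0 hi0]|hno].
  have e : @etop A m x y (topv m) = @etop A m x y (clr i0 (topv m)).
    rewrite !hr; congr t; apply: functional_extensionality_dep => -[i j] /=.
    rewrite !bit_enc ltn_ord /=.
    case: (eqVneq i i0) => [->|hne].
      by rewrite eqxx (hi0 _ _ (hab i0 j)).
    by rewrite hne.
  rewrite etop_top etop_nottop in e; last exact: not_alltop_clr.
  by rewrite e; case: hgac.
have hnt : forall i : 'I_m, exists cd : A * A, be i cd.1 cd.2 /\ cd.1 <> cd.2.
  move=> i; apply: NNPP => H; apply: hno; exists i => c d hcd; apply: NNPP => hne.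
  by apply: H; exists (c, d).
have [cd hcd] := functional_choice _ hnt.
pose k := fun _ : 'I_m => N.+1.
pose a' : forall i, 'I_(k i) -> A := fun i j => if nat_of_ord j < N then a i j else (cd i).1.
pose b' : forall i, 'I_(k i) -> A := fun i j => if nat_of_ord j < N then b i j else (cd i).2.
pose h (p : 'I_m * nat) : {i : 'I_m & 'I_(k i)} := existT (fun i => 'I_(k i)) p.1 (inord (minn p.2 N)).
pose t' := fun z : {i : 'I_m & 'I_(k i)} -> A => t (fun p => z (h p)).
have ht' : termop X t' by apply: termop_reindex.
have := @centralizes_apply A X m hm be ga hcent k a' b' _ _ t' ht' (@etop A m x y).
rewrite etop_top etop_nottop; last exact: not_alltop_clr.
apply.
- move=> i; exists ord_max; rewrite /a' /b' /= ltnn; by case: (hcd i).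
- move=> i l; rewrite /a' /b'; case: ifP => _ //; by case: (hcd i).
- move=> kk; rewrite hr /t'; apply: hs => i j hj /=.
  have hjN : minn j N = j by apply/minn_idPl; apply: ltnW.
  by rewrite /a' /b' inordK hjN ?hj // ltnS ltnW.
- move=> kk _ hk; rewrite !etop_nottop //; [by case: hgac| exact: not_alltop_clr].
Qed.

End Rep.

Section FL.
Variable A : Type.
Variable X : algebra A.
Variable n : nat.
Variable alpha : 'I_n -> A -> A -> Prop.
Hypothesis hc : forall i, congruence X (alpha i).
Variable I : {set 'I_n}.

Definition beI := fun j : 'I_#|I| => alpha (enum_val j).

Definition phiL (k : 'I_(2 ^ n)) : 'I_(2 ^ #|I|) :=
  vtx #|I| (fun j => oapp (fun j' : 'I_#|I| => bit k (enum_val j')) false (insub j)).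

Definition phiF (k : 'I_(2 ^ #|I|)) : 'I_(2 ^ n) :=
  vtx n (fun i => oapp (fun i' : 'I_n => (i' \in I) && bit k (index i' (enum I))) false (insub i)).

Lemma bit_phiL k (j : 'I_#|I|) : bit (phiL k) j = bit k (enum_val j).
Proof. by rewrite bit_vtx ltn_ord valK. Qed.

Lemma bit_phiF k (i : 'I_n) : bit (phiF k) i = (i \in I) && bit k (index i (enum I)).
Proof. by rewrite bit_vtx ltn_ord valK. Qed.

Lemma index_lt (i : 'I_n) : i \in I -> index i (enum I) < #|I|.
Proof. by move=> h; rewrite cardE index_mem mem_enum. Qed.

Lemma enum_val_index (i : 'I_n) (h : i \in I) : enum_val (Ordinal (index_lt h)) = i.
Proof. by rewrite /enum_val /= nth_index // mem_enum. Qed.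

Lemma index_enum_val (j : 'I_#|I|) : index (enum_val j) (enum I) = j.
Proof. by rewrite /enum_val index_uniq ?enum_uniq // -cardE. Qed.

Lemma Delta_lift v : Delta X beI v -> Delta X alpha (fun k => v (phiL k)).
Proof.
apply: Delta_hom => j a b hab.
apply: (@D_gen _ X _ _ (enum_val j) a b _ hab) => k.
by rewrite /cvec bit_phiL.
Qed.

Hypothesis hI : I != set0.

Lemma cardI_gt0 : 0 < #|I|.
Proof. by rewrite card_gt0. Qed.

Lemma Delta_face v : Delta X alpha v -> Delta X beI (fun k => v (phiF k)).
Proof.
apply: Delta_hom => i a b hab.
case hiI : (i \in I).
  apply: (@D_gen _ X _ _ (Ordinal (index_lt hiI)) a b); first by rewrite /beI enum_val_index.
  by move=> k; rewrite /cvec bit_phiF hiI.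
have hcI : forall j, congruence X (beI j) by move=> j; apply: hc.
apply: Delta_ext (Delta_const cardI_gt0 hcI a) _ => k.
by rewrite /cvec bit_phiF hiI.
Qed.

Lemma phiLF k : phiL (phiF k) = k.
Proof.
apply: vtx_eq => j hj.
have -> : j = Ordinal hj by [].
by rewrite bit_phiL bit_phiF enum_valP index_enum_val.
Qed.

End FL.

Section Main.
Variable A : Type.
Variables X Y : algebra A.
Variable q : A -> A -> A -> A.
Hypothesis hqX : malcev_term X q.
Hypothesis hqY : malcev_term Y q.
Variable n : nat.
Hypothesis hn : 0 < n.
Variable alpha : 'I_n -> A -> A -> Prop.
Hypothesis hcX : forall i, congruence X (alpha i).
Hypothesis hcY : forall i, congruence Y (alpha i).

Lemma bits_nonzero (K : 'I_(2 ^ n)) : 0 < K -> [set i : 'I_n | bit K i] != set0.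
Proof.
move=> hK; apply/set0Pn.
have : [exists i : 'I_n, bit K i].
  case: (boolP [exists i : 'I_n, bit K i]) => // /existsPn hno.
  move: hK; rewrite -(enc_bit (ltn_ord K)) (@eq_enc _ (fun _ => false)).
    have e0 : forall m, enc (fun _ => false) m = 0 by elim=> //= m ->.
    by rewrite e0.
  by move=> i hi; apply: negbTE (hno (Ordinal hi)).
by case/existsP => i hi; exists i; rewrite inE.
Qed.

Lemma comm_to_Delta_dir :
  (forall I : {set 'I_n}, I != set0 ->
     forall x y, commutator_sub X alpha I x y -> commutator_sub Y alpha I x y) ->
  forall v, Delta X alpha v -> Delta Y alpha v.
Proof.
move=> H v hv.
have claim : forall K, K <= 2 ^ n -> exists u,
    [/\ Delta X alpha u, Delta Y alpha u & forall k : 'I_(2 ^ n), k < K -> u k = v k].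
  elim=> [h0|K IH hK].
    have x0 : 'I_(2 ^ n) by exists 0; rewrite expn_gt0.
    exists (fun _ => v x0); split => //; exact: Delta_const.
  have [|u [uX uY uv]] := IH; first lia.
  pose Kv : 'I_(2 ^ n) := Ordinal hK.
  case: (posnP K) => [K0|Kpos].
    exists (fun _ => v Kv); split; try exact: Delta_const.
    move=> k; rewrite K0 ltnS leqn0 => /eqP k0; congr v; apply: val_inj; by rewrite /= k0.
  pose I := [set i : 'I_n | bit K i].
  have hI : I != set0 := @bits_nonzero Kv Kpos.
  have hm := cardI_gt0 hI.
  have hcIX : forall j, congruence X (@beI _ _ alpha I j) by move=> j; apply: hcX.
  have hcIY : forall j, congruence Y (@beI _ _ alpha I j) by move=> j; apply: hcY.
  have phiFtop : @phiF _ I (topv #|I|) = Kv.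
    apply: vtx_eq => i hi; rewrite (_ : i = Ordinal hi) // bit_phiF inE.
    case hb : (bit K (Ordinal hi)) => //=.
    by rewrite bit_vtx andbT index_lt // inE.
  have phiFlt : forall k', ~~ alltop k' -> @phiF _ I k' < K.
    move=> k' hk'.
    have hle : @phiF _ I k' <= Kv.
      apply: vtx_le => i hi; rewrite (_ : i = Ordinal hi) // bit_phiF inE.
      by case/andP.
    rewrite ltn_neqAle hle andbT; apply/negP => /eqP he.
    move: hk' => /negP; apply; apply/forallP => j.
    have := congr1 (fun z => bit z (enum_val j)) he.
    rewrite /= bit_phiF enum_valP index_enum_val /= => ->.
    by have := enum_valP j; rewrite inE.
  have hE : Delta X (@beI _ _ alpha I) (etop (u Kv) (v Kv)).
    rewrite -phiFtop.
    apply: (etop_agree hqX hm hcIX (u := fun k => u (@phiF _ I k)) (v := fun k => v (@phiF _ I k))).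
    - exact: Delta_face.
    - exact: Delta_face.
    - move=> k' hk'; apply: uv; exact: phiFlt.
  have cX : commutator_sub X alpha I (u Kv) (v Kv) := Delta_to_comm hcIX hm hE.
  have cY := H I hI _ _ cX.
  have EX := Delta_lift (comm_to_Delta hqX hm hcIX cX).
  have EY := Delta_lift (comm_to_Delta hqY hm hcIY cY).
  have W : forall k : 'I_(2 ^ n), alltop (@phiL _ I k) -> K <= k.
    move=> k /forallP hk; have -> : K = Kv by [].
    apply: vtx_le => i hi hb.
    have hiI : Ordinal hi \in I by rewrite inE.
    have := hk (Ordinal (index_lt hiI)); by rewrite bit_phiL enum_val_index.
  exists (fun k => q (u k) (u Kv) (etop (u Kv) (v Kv) (@phiL _ I k))); split.
  - by apply: Delta_q => //; exact: Delta_const.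
  - by apply: Delta_q => //; exact: Delta_const.
  - move=> k; rewrite ltnS leq_eqVlt => /orP [/eqP ek|lk].
      have -> : k = Kv by apply: val_inj.
      rewrite /etop (_ : alltop (@phiL _ I Kv)); first by rewrite (qxxy hqX).
      by apply/forallP => j; rewrite bit_phiL; have := enum_valP j; rewrite inE.
    rewrite /etop; case: ifP => [/W|_]; first by lia.
    by rewrite (qyxx hqX) uv.
have [u [_ uY uv]] := claim _ (leqnn _).
by apply: Delta_ext uY _ => k; rewrite uv.
Qed.

Lemma Delta_to_comm_dir :
  (forall v, Delta X alpha v -> Delta Y alpha v) ->
  forall I : {set 'I_n}, I != set0 ->
     forall x y, commutator_sub X alpha I x y -> commutator_sub Y alpha I x y.
Proof.
move=> H I hI x y cX.
have hm := cardI_gt0 hI.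
have hcIX : forall j, congruence X (@beI _ _ alpha I j) by move=> j; apply: hcX.
have hcIY : forall j, congruence Y (@beI _ _ alpha I j) by move=> j; apply: hcY.
have EX := Delta_lift (comm_to_Delta hqX hm hcIX cX).
have EY := Delta_face hcY hI (H _ EX).
apply: (Delta_to_comm hcIY hm).
by apply: Delta_ext EY _ => k; rewrite phiLF.
Qed.

End Main.

Unset Implicit Arguments.


Theorem mainTheorem10 (A : Type) (XA XB : algebra A) (q : A -> A -> A -> A)
    (hqA : malcev_term XA q) (hqB : malcev_term XB q)
    (n : nat) (hn : 1 <= n) (alpha : 'I_n -> A -> A -> Prop)
    (hcA : forall i, congruence XA (alpha i)) (hcB : forall i, congruence XB (alpha i)) :
  (forall I : {set 'I_n}, I != set0 ->
     forall x y, commutator_sub XA alpha I x y <-> commutator_sub XB alpha I x y)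
  <->
  (forall v : 'I_(2 ^ n) -> A, Delta XA alpha v <-> Delta XB alpha v).
Proof.
split.
- move=> H v; split.
  + apply: (comm_to_Delta_dir hqA hqB hn hcA hcB) => I hI x y; by case: (H I hI x y).
  + apply: (comm_to_Delta_dir hqB hqA hn hcB hcA) => I hI x y; by case: (H I hI x y).
- move=> H I hI x y; split.
  + exact: (Delta_to_comm_dir hqA hcA hcB (fun v => proj1 (H v)) hI).
  + exact: (Delta_to_comm_dir hqB hcB hcA (fun v => proj2 (H v)) hI).
Qed.
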